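(* Let $W:\mathcal{X}\to\mathcal{Y}$ be a channel with $\mathcal{Y}$ finite, let $n\in\mathbb{N}$, $0<\delta\le\sqrt{n}\log|\mathcal{Y}|$, and let $x^n,x'^n\in\mathcal{X}^n$ satisfy $1-\frac12\|W_{x^n}-W_{x'^n}\|_1\le\epsilon$. Then \[ W_{x'^n}(\mathcal{T}^\delta_{x^n})\le 2\exp\!\left(-\delta^2/36K(|\mathcal{Y}|)\right)+\epsilon\left(1+2^{2\delta\sqrt{n}}\,2^{H(W_{x^n})-H(W_{x'^n})}\right). \]
   Context: A channel $W:\mathcal{X}\to\mathcal{Y}$ ($\mathcal{X}$ a measurable space) is a measurable map $x\mapsto W_x\in\mathcal{P}(\mathcal{Y})$; $W_{x^n}(y^n)=\prod_{i=1}^nW_{x_i}(y_i)$. Logarithms and exponentials are base 2. $\|P-Q\|_1=\sum_y|P(y)-Q(y)|$. $H$ denotes Shannon entropy (base 2), so $H(W_{x^n})=\sum_iH(W_{x_i})$. The conditional typical set is $\mathcal{T}^\delta_{x^n}=\{y^n\in\mathcal{Y}^n:|\log W_{x^n}(y^n)+H(W_{x^n})|\le\delta\sqrt{n}\}$, and $K(d)=(\log\max\{d,3\})^2$. *)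

(* Defs.v *)
From HB Require Import structures.
From mathcomp Require Import all_boot all_order all_algebra.
From mathcomp Require Import all_classical all_reals all_analysis.
Set Implicit Arguments. Unset Strict Implicit. Unset Printing Implicit Defensive.
Import Order.TTheory GRing.Theory Num.Theory.
Local Open Scope ring_scope.

Definition log2 {R : realType} (x : R) : R := ln x / ln 2.

Definition is_channel {d : measure_display} {X : measurableType d}
  {Y : finType} {R : realType} (W : X -> Y -> R) : Prop :=
  [/\ forall x y, 0 <= W x y,
      forall x, \sum_(y : Y) W x y = 1
    & forall y, measurable_fun setT (fun x => W x y)].

Definition entropy {Y : finType} {R : realType} (P : Y -> R) : R :=
  - \sum_(y : Y) (if P y == 0 then 0 else P y * log2 (P y)).

Definition Wn {X : Type} {Y : finType} {R : realType} (W : X -> Y -> R)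
  (n : nat) (xn : 'I_n -> X) (yn : {ffun 'I_n -> Y}) : R :=
  \prod_(i < n) W (xn i) (yn i).

Definition Hn {X : Type} {Y : finType} {R : realType} (W : X -> Y -> R)
  (n : nat) (xn : 'I_n -> X) : R :=
  \sum_(i < n) entropy (W (xn i)).

(* conditional typical set T^delta_{x^n}; log 0 = -oo so W_{x^n}(y^n) > 0 is required *)
Definition typical {X : Type} {Y : finType} {R : realType} (W : X -> Y -> R)
  (n : nat) (xn : 'I_n -> X) (delta : R) : {set {ffun 'I_n -> Y}} :=
  [set yn | (0 < Wn W xn yn) &&
     (`| log2 (Wn W xn yn) + Hn W xn | <= delta * Num.sqrt (n%:R))].

Definition l1n {X : Type} {Y : finType} {R : realType} (W : X -> Y -> R)
  (n : nat) (xn xn' : 'I_n -> X) : R :=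
  \sum_(yn : {ffun 'I_n -> Y}) `| Wn W xn yn - Wn W xn' yn |.

Definition Kc {R : realType} (d : R) : R := (log2 (Num.max d 3)) ^+ 2.

(* Main.v *)
Require Import Defs.
From HB Require Import structures.
From mathcomp Require Import all_boot all_order all_algebra.
From mathcomp Require Import all_classical all_reals all_analysis.
From mathcomp Require Import ring lra.
Import Order.TTheory GRing.Theory Num.Theory.
Local Open Scope ring_scope.


Lemma ln_prodP {R : realType} n (f : 'I_n -> R) : (forall i, 0 < f i) ->
  ln (\prod_i f i) = \sum_i ln (f i).
Proof.
move=> fp.
suff: 0 < \prod_i f i /\ ln (\prod_i f i) = \sum_i ln (f i) by case.
elim/big_rec2: _ => [|i a b _ [bp eb]]; first by rewrite ln1.
split; first by rewrite mulr_gt0.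
by rewrite lnM ?posrE // eb.
Qed.

Lemma sq_le_2exp {R : realType} (y : R) : 0 <= y -> y ^+ 2 <= 2 * expR y.
Proof.
move=> y0; have := expR_ge1Dxn 1 y0.
rewrite /= (_ : (2`!)%:R = 2 :> R); last by [] .
move=> h; have := sqr_ge0 y; lra.
Qed.

Lemma expR_le_quad {R : realType} (u : R) : u <= 1/3 -> expR u <= 1 + u + u ^+ 2.
Proof.
move=> hu.
have h1 : 1 - u/2 <= expR (- (u/2)) by have := expR_ge1Dx (- (u/2)); lra.
have ee : expR u = expR (u/2) * expR (u/2) by rewrite -expRD; congr expR; field.
have hm : expR (u/2) * expR (- (u/2)) = 1 by rewrite -expRD subrr expR0.
rewrite ee.
set e := expR (u/2) in hm *.
have e0 : 0 < e by apply: expR_gt0.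
set a := 1 - u/2 in h1 *.
have ha : 0 < a by rewrite /a; lra.
have ea : e * a <= 1 by rewrite -hm ler_pM2l.
have ea2 : (e * a) ^+ 2 <= 1.
  have : 0 <= e * a by rewrite mulr_ge0 // ltW.
  nra.
have hkey : 1 <= (1 + u + u ^+ 2) * a ^+ 2.
  rewrite /a.
  have : 0 <= u ^+ 2 * (1 - 3 * u + u ^+ 2) / 4.
    apply: mulr_ge0; last lra.
    apply: mulr_ge0; first exact: sqr_ge0.
    have := sqr_ge0 u; lra.
  move=> hh; apply: (le_trans (y := 1 + u ^+ 2 * (1 - 3 * u + u ^+ 2) / 4)); first lra.
  rewrite le_eqVlt; apply/orP; left; apply/eqP; rewrite !expr2; by field.
have h : (e * e) * a ^+ 2 <= (1 + u + u ^+ 2) * a ^+ 2.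
  apply: le_trans hkey; apply: le_trans ea2.
  by rewrite le_eqVlt; apply/orP; left; apply/eqP; rewrite !expr2; ring.
by rewrite ler_pM2r ?exprn_gt0 in h.
Qed.

Lemma ln3_ge1 {R : realType} : 1 <= ln (3 : R).
Proof.
have h : expR (- (1/8)) >= 7/8 :> R by have := expR_ge1Dx (- (1/8) : R); lra.
rewrite expRN in h.
have h2 : expR (1/8) <= 8/7 :> R.
  rewrite -(invrK (expR (1/8))) -[8/7 : R]invf_div lef_pV2 ?posrE ?invr_gt0 ?expR_gt0 //; lra.
have e8 : expR 1 = expR (1/8) ^+ 8 :> R.
  by rewrite -expRM_natl; congr expR; field.
have p8 : expR (1/8) ^+ 8 <= (8/7) ^+ 8 :> R.
  by apply: lerXn2r; rewrite ?nnegrE ?expR_ge0 //; lra.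
have n8 : (8/7) ^+ 8 <= 3 :> R by rewrite !exprS expr0; lra.
have h3 : expR 1 <= 3 :> R by rewrite e8; apply: le_trans p8 n8.
by have := h3; rewrite -ler_ln ?posrE ?expR_gt0 // expRK.
Qed.

Lemma ln2_le {R : realType} : ln (2 : R) <= 3/4.
Proof.
have h : 1 + 3/32 <= expR (3/32) :> R by apply: expR_ge1Dx.
have e8 : expR (3/4) = expR (3/32) ^+ 8 :> R.
  by rewrite -expRM_natl; congr expR; field.
have p8 : (1 + 3/32) ^+ 8 <= expR (3/32) ^+ 8 :> R.
  by apply: lerXn2r; rewrite ?nnegrE ?expR_ge0 //; lra.
have n8 : 2 <= (1 + 3/32) ^+ 8 :> R by rewrite !exprS expr0; lra.
have h3 : 2 <= expR (3/4) :> R by rewrite e8; apply: le_trans n8 p8.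
by have := h3; rewrite -ler_ln ?posrE ?expR_gt0 // expRK.
Qed.


Lemma pt_bound {R : realType} (M q : R) : 0 < M -> 0 < q <= 1 -> 0 <= ln M ->
  q * ln q ^+ 2 <= 4 * ln M ^+ 2 * q + 8 / M.
Proof.
move=> M0 /andP[q0 q1] l0.
set l := ln M.
have lq : ln q <= 0 by apply: ln_le0.
set x := - ln q.
have x0 : 0 <= x by rewrite /x oppr_ge0.
have sq : ln q ^+ 2 = x ^+ 2 by rewrite /x sqrrN.
rewrite sq.
have M8 : 0 <= 8 / M by rewrite divr_ge0 // ltW.
case: (leP x (2 * l)) => hx.
  have : x ^+ 2 <= 4 * l ^+ 2 by nra.
  move=> h; have : q * x ^+ 2 <= q * (4 * l ^+ 2) by rewrite ler_pM2l.
  lra.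
have h2 : expR (x / 2) <= expR (x - l) by rewrite ler_expR; lra.
have h3 : x ^+ 2 <= 8 * expR (x - l).
  have := @sq_le_2exp _ (x / 2) (divr_ge0 x0 (ler0n _ 2)).
  have e : (x / 2) ^+ 2 = x ^+ 2 / 4 by rewrite expr_div_n; congr (_ / _); rewrite expr2 -natrM.
  rewrite e; lra.
have h4 : q * expR (x - l) = 1 / M.
  rewrite expRD expRN /x expRN lnK ?posrE // /l lnK ?posrE //.
  by rewrite mulrA divff ?gt_eqF // mul1r div1r.
have : q * x ^+ 2 <= q * (8 * expR (x - l)) by rewrite ler_pM2l.
have h5 : q * (8 * expR (x - l)) = 8 / M by rewrite mulrCA h4 mul1r.
rewrite h5.
have : 0 <= 4 * l ^+ 2 * q by apply: mulr_ge0; [apply: mulr_ge0; [lra | apply: sqr_ge0] | apply: ltW].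
lra.
Qed.

Lemma E2_bound {R : realType} (Y : finType) (q : Y -> R) :
  (forall y, 0 <= q y) -> \sum_y q y = 1 ->
  \sum_y q y * ln (q y) ^+ 2 <= 12 * ln (Num.max (#|Y|%:R) 3) ^+ 2.
Proof.
move=> q0 q1.
set M := Num.max (#|Y|%:R) 3.
have M3 : 3 <= M by rewrite /M le_max lexx orbT.
have Md : #|Y|%:R <= M by rewrite /M le_max lexx.
have M0 : 0 < M by apply: lt_le_trans M3; lra.
have l1 : 1 <= ln M.
  apply: le_trans (ln3_ge1) _; rewrite ler_ln ?posrE //; lra.
have qle1 : forall y, q y <= 1.
  move=> y; rewrite -q1 (bigD1 y) //= lerDl sumr_ge0 //.
have pt : forall y, q y * ln (q y) ^+ 2 <= 4 * ln M ^+ 2 * q y + 8 / M.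
  move=> y; have := q0 y; rewrite le_eqVlt => /orP[/eqP <-|qp].
    by rewrite mul0r mulr0 add0r divr_ge0 // ltW.
  by apply: pt_bound => //; [rewrite qp qle1 | lra].
apply: le_trans (ler_sum _ (fun y _ => pt y)) _.
rewrite big_split /= -mulr_sumr q1 mulr1 sumr_const -mulr_natl.
have : #|Y|%:R * (8 / M) <= 8.
  rewrite mulrCA ler_piMr // ler_pdivrMr // mul1r.
  by move: Md; rewrite /M.
have : 1 <= ln M ^+ 2 by nra.
lra.
Qed.


Lemma mgf_bound {R : realType} (Y : finType) (q : Y -> R) (lam : R) :
  (forall y, 0 <= q y) -> \sum_y q y = 1 -> 0 <= lam ->
  lam ^+ 2 * (\sum_y q y * ln (q y) ^+ 2) <= 1/9 ->
  \sum_y q y * expR (lam * (- (\sum_y q y * ln (q y)) + ln (q y)))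
    <= 1 + lam ^+ 2 * (\sum_y q y * ln (q y) ^+ 2).
Proof.
move=> q0 q1 l0 hl.
set H := - (\sum_y q y * ln (q y)).
set E2 := \sum_y q y * ln (q y) ^+ 2.
have qle1 : forall y, q y <= 1.
  move=> y; rewrite -q1 (bigD1 y) //= lerDl sumr_ge0 //.
have lq : forall y, ln (q y) <= 0 by move=> y; apply: ln_le0.
have H0 : 0 <= H.
  rewrite /H oppr_ge0 sumr_le0 // => y _.
  by rewrite mulr_ge0_le0.
have V : \sum_y q y * (H + ln (q y)) ^+ 2 = E2 - H ^+ 2.
  have -> : \sum_y q y * (H + ln (q y)) ^+ 2 =
     \sum_y (H ^+ 2 * q y + (2 * H) * (q y * ln (q y)) + q y * ln (q y) ^+ 2).
    by apply: eq_bigr => y _; ring.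
  rewrite !big_split /= -!mulr_sumr q1.
  rewrite -/E2 (_ : \sum_y q y * ln (q y) = - H); last by rewrite /H opprK.
  ring.
have HE : H ^+ 2 <= E2.
  have : 0 <= \sum_y q y * (H + ln (q y)) ^+ 2.
    by apply: sumr_ge0 => y _; rewrite mulr_ge0 // sqr_ge0.
  rewrite V; lra.
have lH : lam * H <= 1/3.
  have : (lam * H) ^+ 2 <= 1/9.
    rewrite exprMn; apply: le_trans hl.
    by apply: ler_wpM2l; [apply: sqr_ge0 | ].
  have : 0 <= lam * H by rewrite mulr_ge0.
  nra.
have pt : forall y, q y * expR (lam * (H + ln (q y))) <=
    q y * (1 + lam * (H + ln (q y)) + (lam * (H + ln (q y))) ^+ 2).
  move=> y; rewrite ler_wpM2l //; apply: expR_le_quad.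
  have := lq y; nra.
apply: le_trans (ler_sum _ (fun y _ => pt y)) _.
have -> : \sum_y q y * (1 + lam * (H + ln (q y)) + (lam * (H + ln (q y))) ^+ 2)
   = \sum_y (q y + lam * (H * q y + q y * ln (q y)) + lam ^+ 2 * (q y * (H + ln (q y)) ^+ 2)).
  by apply: eq_bigr => y _; ring.
rewrite !big_split /= -!mulr_sumr big_split /= -mulr_sumr q1 V.
rewrite (_ : \sum_y q y * ln (q y) = - H); last by rewrite /H opprK.
have : 0 <= lam ^+ 2 * H ^+ 2 by rewrite mulr_ge0 // sqr_ge0.
nra.
Qed.


Lemma prod_sum {R : realType} (Y : finType) n (g : 'I_n -> Y -> R) :
  \sum_(yn : {ffun 'I_n -> Y}) \prod_i g i (yn i) = \prod_i \sum_y g i y.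
Proof. by rewrite bigA_distr_bigA. Qed.

Lemma entropyE {R : realType} (Y : finType) (q : Y -> R) :
  entropy q = (- \sum_y q y * ln (q y)) / ln 2.
Proof.
rewrite /entropy /log2 mulNr mulr_suml; congr (- _); apply: eq_bigr => y _.
by case: eqP => [->|_]; [rewrite !mul0r | rewrite mulrA].
Qed.

Theorem lemma2 (R : realType) (d : measure_display) (X : measurableType d)
  (Y : finType) (W : X -> Y -> R) (n : nat) (delta eps : R)
  (xn xn' : 'I_n -> X) :
  is_channel W ->
  0 < delta -> delta <= Num.sqrt (n%:R) * log2 (#|Y|%:R) ->
  1 - (2%:R)^-1 * l1n W xn xn' <= eps ->
  \sum_(yn in typical W xn delta) Wn W xn' yn <=
    2%:R * powR 2 (- (delta ^+ 2 / (36%:R * Kc (#|Y|%:R))))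
    + eps * (1 + powR 2 (2%:R * delta * Num.sqrt (n%:R))
                 * powR 2 (Hn W xn - Hn W xn')).
Proof.
move=> [W0 W1 _] d0 dle heps.
set L2 := ln (2 : R).
have L2p : 0 < L2 by apply: ln_gt0; lra.
have L2le : L2 <= 3/4 := ln2_le.
set s := Num.sqrt (n%:R : R).
have s0 : 0 <= s := sqrtr_ge0 _.
have ss : s ^+ 2 = n%:R by rewrite sqr_sqrtr // ler0n.
set dY := (#|Y|%:R : R).
set M := Num.max dY 3.
set l := ln M.
have M3 : 3 <= M by rewrite /M le_max lexx orbT.
have Md : dY <= M by rewrite /M le_max lexx.
have M0 : 0 < M by apply: lt_le_trans M3; lra.
have l1 : 1 <= l.
  apply: le_trans (ln3_ge1) _; rewrite ler_ln ?posrE //; lra.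
have hdle : delta <= s * (ln dY / L2) by [].
have sp : 0 < s.
  rewrite lt_neqAle s0 andbT; apply/eqP => s_0; rewrite -s_0 mul0r in hdle; lra.
have lndp : 0 < ln dY / L2.
  rewrite ltNge; apply/negP => h.
  have : s * (ln dY / L2) <= 0 by rewrite mulr_ge0_le0 // ltW.
  lra.
have lndp' : 0 < ln dY.
  by move: lndp; rewrite pmulr_lgt0 // invr_gt0.
have dYp : 0 < dY.
  rewrite lt_neqAle ler0n andbT; apply/eqP => h; move: lndp'.
  by rewrite -h ltNge ln_le0 // ler01.
have lnd : ln dY <= l by rewrite /l ler_ln ?posrE.
have hdL : delta * L2 <= s * l.
  have : delta * L2 <= s * ln dY.
    have := ler_wpM2r (ltW L2p) hdle.
    by rewrite -mulrA divfK ?gt_eqF.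
  move=> h; apply: le_trans h _; rewrite ler_wpM2l //.
set q := fun i : 'I_n => W (xn' i).
have q0 : forall i y, 0 <= q i y by move=> i y; apply: W0.
have q1 : forall i, \sum_y q i y = 1 by move=> i; apply: W1.
set Hi := fun i => - \sum_y q i y * ln (q i y).
set E2 := fun i => \sum_y q i y * ln (q i y) ^+ 2.
have E2b : forall i, E2 i <= 12 * l ^+ 2 by move=> i; apply: E2_bound.
set lam := delta * L2 / (24 * s * l ^+ 2).
have lp : 0 < l by lra.
have lam0 : 0 <= lam.
  by rewrite /lam divr_ge0 // ?mulr_ge0 // ltW.
have laml : lam * l <= 1/24.
  have -> : lam * l = (delta * L2) / (24 * (s * l)).
    by rewrite /lam; field; rewrite ?gt_eqF.
  rewrite ler_pdivrMr ?mulr_gt0 //; lra.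
have lamE : forall i, lam ^+ 2 * E2 i <= 1/9.
  move=> i; apply: (le_trans (y := lam ^+ 2 * (12 * l ^+ 2))).
    by apply: ler_wpM2l; [apply: sqr_ge0 | apply: E2b].
  have : 0 <= lam * l by rewrite mulr_ge0 // ltW.
  have -> : lam ^+ 2 * (12 * l ^+ 2) = 12 * (lam * l) ^+ 2 by ring.
  nra.
set r := delta * s.
have HQ : Hn W xn' = (\sum_i Hi i) / L2.
  rewrite /Hn mulr_suml; apply: eq_bigr => i _; by rewrite entropyE.
set bad := fun yn => (0 < Wn W xn' yn) && (r < log2 (Wn W xn' yn) + Hn W xn').
set f := fun i y => q i y * expR (lam * (Hi i + ln (q i y))).
have f0 : forall i y, 0 <= f i y by move=> i y; rewrite mulr_ge0 ?expR_ge0.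
have hb : \sum_yn (if bad yn then Wn W xn' yn else 0) <=
    expR (- (lam * (r * L2))) * \prod_i \sum_y f i y.
  rewrite -prod_sum mulr_sumr; apply: ler_sum => yn _.
  case: ifP => [/andP[Qp hr] | _]; last first.
    by rewrite mulr_ge0 ?expR_ge0 // prodr_ge0.
  have qp : forall i, 0 < q i (yn i).
    move=> i; rewrite lt_neqAle q0 andbT eq_sym.
    have : Wn W xn' yn != 0 by rewrite gt_eqF.
    by move/prodf_neq0 => /(_ i isT).
  have lnQ : ln (Wn W xn' yn) = \sum_i ln (q i (yn i)) by apply: ln_prodP.
  have pf : \prod_i f i (yn i) = Wn W xn' yn * expR (lam * (\sum_i Hi i + ln (Wn W xn' yn))).
    rewrite /f big_split /= -expR_sum lnQ -big_split /= mulr_sumr.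
    by [].
  rewrite pf.
  move: hr; rewrite HQ /log2 -/L2 => hr.
  have hr' : r * L2 < ln (Wn W xn' yn) + \sum_i Hi i.
    have := ltr_pM2r L2p; move=> e; rewrite -e in hr.
    by move: hr; rewrite mulrDl !divfK ?gt_eqF.
  rewrite mulrCA -expRD.
  rewrite -{1}(mulr1 (Wn W xn' yn)); apply: ler_wpM2l; first exact: ltW.
  apply: le_trans (expR_ge1Dx _).
  have : 0 <= lam * (ln (Wn W xn' yn) + \sum_i Hi i - r * L2).
    by rewrite mulr_ge0 // subr_ge0 ltW.
  lra.
have hprod : \prod_i \sum_y f i y <= expR (12 * l ^+ 2 * lam ^+ 2) ^+ n.
  have -> : expR (12 * l ^+ 2 * lam ^+ 2) ^+ n = \prod_(i < n) expR (12 * l ^+ 2 * lam ^+ 2).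
    by rewrite prodr_const card_ord.
  apply: ler_prod => i _; rewrite sumr_ge0 //=.
  have := @mgf_bound _ _ (q i) lam (q0 i) (q1 i) lam0 (lamE i).
  move=> h; apply: le_trans h _.
  apply: le_trans (expR_ge1Dx _); rewrite lerD2l.
  have := ler_wpM2l (sqr_ge0 lam) (E2b i).
  rewrite -/(E2 i); lra.
have hchern : \sum_yn (if bad yn then Wn W xn' yn else 0) <=
    2%:R * powR 2 (- (delta ^+ 2 / (36%:R * Kc (#|Y|%:R)))).
  apply: le_trans hb _.
  apply: le_trans (ler_wpM2l (expR_ge0 _) hprod) _.
  rewrite -expRM_natl -expRD.
  have eexp : - (lam * (r * L2)) + n%:R * (12 * l ^+ 2 * lam ^+ 2)
      = - (delta ^+ 2 * L2 ^+ 2 / l ^+ 2) / 48.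
    rewrite -ss /lam /r; field; rewrite ?gt_eqF //.
  have epow : powR 2 (- (delta ^+ 2 / (36%:R * Kc (#|Y|%:R))))
      = expR (- (delta ^+ 2 * L2 ^+ 2 / l ^+ 2) * L2 / 36).
    rewrite /powR (negbTE (_ : (2:R) != 0)) //; congr expR.
    rewrite /Kc /log2 -/dY -/M -/l -/L2; field; rewrite ?gt_eqF //.
  rewrite eexp epow.
  have t0 : 0 <= delta ^+ 2 * L2 ^+ 2 / l ^+ 2.
    by apply: divr_ge0; [apply: mulr_ge0; apply: sqr_ge0 | apply: sqr_ge0].
  have : expR (- (delta ^+ 2 * L2 ^+ 2 / l ^+ 2) / 48) <=
         expR (- (delta ^+ 2 * L2 ^+ 2 / l ^+ 2) * L2 / 36).
    rewrite ler_expR; nra.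
  have := expR_ge0 (- (delta ^+ 2 * L2 ^+ 2 / l ^+ 2) * L2 / 36).
  lra.
set c := powR 2 (2%:R * delta * s) * powR 2 (Hn W xn - Hn W xn').
have c0 : 0 <= c by rewrite mulr_ge0 ?powR_ge0.
have P0 : forall yn, 0 <= Wn W xn yn by move=> yn; apply: prodr_ge0 => i _; apply: W0.
have Q0 : forall yn, 0 <= Wn W xn' yn by move=> yn; apply: prodr_ge0 => i _; apply: W0.
have Psum : forall xs : 'I_n -> X, \sum_yn Wn W xs yn = 1.
  move=> xs; transitivity (\prod_(i < n) \sum_y W (xs i) y).
    exact: (prod_sum _ _ (fun i y => W (xs i) y)).
  by apply: big1 => i _; apply: W1.
set m := fun yn => (Wn W xn yn + Wn W xn' yn - `|Wn W xn yn - Wn W xn' yn|) / 2.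
have m0 : forall yn, 0 <= m yn.
  move=> yn; rewrite /m divr_ge0 // subr_ge0.
  have := P0 yn; have := Q0 yn.
  case: (leP (Wn W xn' yn) (Wn W xn yn)) => h.
    by rewrite ger0_norm ?subr_ge0 //; lra.
  by rewrite ltr0_norm ?subr_lt0 //; lra.
have msum : \sum_yn m yn = 1 - 2^-1 * l1n W xn xn'.
  rewrite /m -mulr_suml sumrB big_split /= !Psum /l1n.
  by move: (\sum_yn _) => S; lra.
have pw : forall yn, yn \in typical W xn delta ->
    Wn W xn' yn <= (if bad yn then Wn W xn' yn else 0) + (1 + c) * m yn.
  move=> yn; rewrite /typical inE => /andP[Pp habs].
  have cm : 0 <= (1 + c) * m yn by rewrite mulr_ge0 // addr_ge0.
  case: ifP => hbad; first lra.
  rewrite add0r.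
  case: (eqVneq (Wn W xn' yn) 0) => [->|Qn0]; first by [].
  have Qp : 0 < Wn W xn' yn by rewrite lt_neqAle eq_sym Qn0 Q0.
  have hQ : log2 (Wn W xn' yn) + Hn W xn' <= r.
    by move/negbT: hbad; rewrite /bad Qp /= -leNgt.
  case: (leP (Wn W xn' yn) (Wn W xn yn)) => hPQ.
    rewrite /m ger0_norm ?subr_ge0 //.
    have -> : (Wn W xn yn + Wn W xn' yn - (Wn W xn yn - Wn W xn' yn)) / 2 = Wn W xn' yn by field.
    have := mulr_ge0 c0 (Q0 yn); lra.
  rewrite /m ltr0_norm ?subr_lt0 //.
  have -> : (Wn W xn yn + Wn W xn' yn - - (Wn W xn yn - Wn W xn' yn)) / 2 = Wn W xn yn by field.
  have lnQ : ln (Wn W xn' yn) <= (r - Hn W xn') * L2.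
    have h : ln (Wn W xn' yn) / L2 <= r - Hn W xn' by move: hQ; rewrite /log2 -/L2; lra.
    by have := ler_wpM2r (ltW L2p) h; rewrite divfK ?gt_eqF.
  have lnP : (- r - Hn W xn) * L2 <= ln (Wn W xn yn).
    have h : - r - Hn W xn <= ln (Wn W xn yn) / L2.
      by move: habs; rewrite /log2 -/L2 -/s -/r ler_norml => /andP[h1 h2]; lra.
    by have := ler_wpM2r (ltW L2p) h; rewrite divfK ?gt_eqF.
  have cP : Wn W xn' yn <= c * Wn W xn yn.
    rewrite /c /powR (negbTE (_ : (2:R) != 0)) // -/L2.
    rewrite -(lnK (_ : Wn W xn' yn \in Num.pos)) ?posrE //.
    rewrite -(lnK (_ : Wn W xn yn \in Num.pos)) ?posrE //.
    rewrite -!expRD ler_expR.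
    move: lnQ lnP; rewrite /r.
    have e : 2%:R * delta * s * L2 = 2 * (delta * s * L2) by ring.
    rewrite e; nra.
  have := mulr_ge0 c0 (P0 yn) ; lra.
rewrite big_mkcond /=.
apply: (le_trans (y := \sum_yn ((if bad yn then Wn W xn' yn else 0) + (1 + c) * m yn))).
  apply: ler_sum => yn _; case: ifP => hT; first exact: pw.
  apply: addr_ge0; first by case: ifP.
  by apply: mulr_ge0; [apply: addr_ge0 | apply: m0].
rewrite big_split /= -mulr_sumr msum.
apply: lerD; first exact: hchern.
by rewrite mulrC ler_wpM2r // addr_ge0.
Qed.
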